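(* Let $d\geq 3$ and let $(M,g)$ be the Kasner spacetime $M=(0,\infty)\times\mathbb{R}^d$, $g=-dt^2+\sum_{i=1}^d t^{2p_i}\,dx_i^2$, with $\sum_i p_i=1$, $\sum_i p_i^2=1$ and at least one $p_i<0$, time-oriented by $\partial_t$. Then $(M,g)$ is future one-connected.
   Context: A timelike homotopy with fixed endpoints between two future directed timelike (FDTL) curves $\gamma^0,\gamma^1:[a,b]\to M$ with $\gamma^0(a)=\gamma^1(a)$, $\gamma^0(b)=\gamma^1(b)$ is a continuous map $\Gamma:[0,1]\times[a,b]\to M$ with $\Gamma(0,\cdot)=\gamma^0$, $\Gamma(1,\cdot)=\gamma^1$ and each $\Gamma(u,\cdot)$ an FDTL curve from $\gamma^0(a)$ to $\gamma^0(b)$. $(M,g)$ is future one-connected if for all $p,q\in M$ with $q$ in the timelike future of $p$, any two FDTL curves from $p$ to $q$ are timelike homotopic with fixed endpoints. Timelike curves are piecewise smooth. *)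

(* Defs.v *)
From Stdlib Require Import Reals Lra List.
From Coquelicot Require Import Coquelicot.
Open Scope R_scope.

(* A point of the Kasner spacetime M = (0,oo) x R^d is represented by its
   coordinates P : nat -> R, where P 0 = t and P i = x_i for 1 <= i <= d.
   Coordinates with index > d are irrelevant and ignored everywhere. *)
Definition pt := nat -> R.

Definition ptEq (d : nat) (P Q : pt) : Prop :=
  forall i : nat, (i <= d)%nat -> P i = Q i.

Definition in_M (P : pt) : Prop := 0 < P 0%nat.

Definition sumd (d : nat) (f : nat -> R) : R :=
  fold_right Rplus 0 (map f (List.seq 1 d)).

Definition kasner_exponents (d : nat) (p : nat -> R) : Prop :=
  sumd d p = 1 /\ sumd d (fun i => (p i) ^ 2) = 1 /\
  exists i : nat, (1 <= i <= d)%nat /\ p i < 0.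

Definition kasner_g (d : nat) (p : nat -> R) (P v : pt) : R :=
  - (v 0%nat) ^ 2 + sumd d (fun i => Rpower (P 0%nat) (2 * p i) * (v i) ^ 2).

(* future directed timelike vector; time orientation by d/dt, i.e.
   g(v, d/dt) = - v_0 < 0 *)
Definition FDTL_vector (d : nat) (p : nat -> R) (P v : pt) : Prop :=
  0 < v 0%nat /\ kasner_g d p P v < 0.

Definition smooth (f : R -> R) : Prop :=
  forall (n : nat) (x : R), ex_derive_n f n x.

(* There is a partition a = s_0 < s_1 < ... < s_k = b and, for each piece j,
   smooth coordinate functions f j i (i = 0..d) which agree with gamma on
   the closed interval [s_j, s_{j+1}]; the (one-sided, at breakpoints)
   tangent vectors are future directed timelike. *)
Definition FDTL_curve (d : nat) (p : nat -> R) (a b : R) (gamma : R -> pt)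
  : Prop :=
  a < b /\
  exists (k : nat) (s : nat -> R) (f : nat -> nat -> R -> R),
    s 0%nat = a /\ s k = b /\
    (forall j : nat, (j < k)%nat -> s j < s (S j)) /\
    (forall j : nat, (j < k)%nat ->
       (forall i : nat, (i <= d)%nat -> smooth (f j i)) /\
       (forall u : R, s j <= u <= s (S j) ->
          (forall i : nat, (i <= d)%nat -> gamma u i = f j i u) /\
          in_M (gamma u) /\
          FDTL_vector d p (gamma u) (fun i => Derive (f j i) u))).

Definition curve_from_to (d : nat) (a b : R) (gamma : R -> pt) (P Q : pt)
  : Prop := ptEq d (gamma a) P /\ ptEq d (gamma b) Q.

Definition timelike_future (d : nat) (p : nat -> R) (P Q : pt) : Prop :=
  in_M P /\ in_M Q /\
  exists (a b : R) (gamma : R -> pt),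
    FDTL_curve d p a b gamma /\ curve_from_to d a b gamma P Q.

Definition continuous_on_rect (d : nat) (a b : R) (G : R -> R -> pt) : Prop :=
  forall i : nat, (i <= d)%nat ->
  forall u s : R, 0 <= u <= 1 -> a <= s <= b ->
  forall eps : R, 0 < eps -> exists delta : R, 0 < delta /\
  forall u' s' : R, 0 <= u' <= 1 -> a <= s' <= b ->
    Rabs (u' - u) < delta -> Rabs (s' - s) < delta ->
    Rabs (G u' s' i - G u s i) < eps.

Definition timelike_homotopic (d : nat) (p : nat -> R) (a b : R)
  (gamma0 gamma1 : R -> pt) : Prop :=
  exists G : R -> R -> pt,
    continuous_on_rect d a b G /\
    (forall s : R, a <= s <= b ->
       ptEq d (G 0 s) (gamma0 s) /\ ptEq d (G 1 s) (gamma1 s)) /\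
    (forall u : R, 0 <= u <= 1 ->
       FDTL_curve d p a b (G u) /\
       curve_from_to d a b (G u) (gamma0 a) (gamma0 b)).

Definition future_one_connected (d : nat) (p : nat -> R) : Prop :=
  forall P Q : pt, timelike_future d p P Q ->
  forall (a b : R) (gamma0 gamma1 : R -> pt),
    FDTL_curve d p a b gamma0 -> curve_from_to d a b gamma0 P Q ->
    FDTL_curve d p a b gamma1 -> curve_from_to d a b gamma1 P Q ->
    timelike_homotopic d p a b gamma0 gamma1.

(* Main.v *)
Require Import Defs.
From Stdlib Require Import Reals Lra Lia List.
From Coquelicot Require Import Coquelicot.
Open Scope R_scope.


Definition Qf (d : nat) (p : nat -> R) (t : R) (v : pt) : R :=
  - (v 0%nat) ^ 2 + sumd d (fun i => Rpower t (2 * p i) * (v i) ^ 2).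

Lemma kasner_g_Qf d p P v : kasner_g d p P v = Qf d p (P 0%nat) v.
Proof. reflexivity. Qed.

Lemma fold_ext (l : list nat) (f g : nat -> R) :
  (forall i, In i l -> f i = g i) ->
  fold_right Rplus 0 (map f l) = fold_right Rplus 0 (map g l).
Proof.
  induction l as [|x l IH]; simpl; intros H; auto.
  rewrite H by auto. rewrite IH by auto. reflexivity.
Qed.


Lemma fold_le (l : list nat) (f g : nat -> R) :
  (forall i, In i l -> f i <= g i) ->
  fold_right Rplus 0 (map f l) <= fold_right Rplus 0 (map g l).
Proof.
  induction l as [|x l IH]; simpl; intros H; [lra|].
  assert (H1 := H x (or_introl eq_refl)).
  assert (IH' := IH (fun i Hi => H i (or_intror Hi))). lra.
Qed.

Lemma fold_lin (l : list nat) (f g : nat -> R) (a b : R) :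
  fold_right Rplus 0 (map (fun i => a * f i + b * g i) l) =
  a * fold_right Rplus 0 (map f l) + b * fold_right Rplus 0 (map g l).
Proof. induction l as [|x l IH]; simpl; [ring|]. rewrite IH. ring. Qed.

Lemma fold_scal (l : list nat) (f : nat -> R) (a : R) :
  fold_right Rplus 0 (map (fun i => a * f i) l) = a * fold_right Rplus 0 (map f l).
Proof. induction l as [|x l IH]; simpl; [ring|]. rewrite IH. ring. Qed.

Lemma in_seq1 d i : In i (seq 1 d) -> (1 <= i <= d)%nat.
Proof. intros H. apply in_seq in H. lia. Qed.

Lemma sumd_ext d f g : (forall i, (1 <= i <= d)%nat -> f i = g i) -> sumd d f = sumd d g.
Proof. intros H. unfold sumd. apply fold_ext. intros i Hi. apply H, in_seq1, Hi. Qed.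

Lemma sumd_le d f g : (forall i, (1 <= i <= d)%nat -> f i <= g i) -> sumd d f <= sumd d g.
Proof. intros H. unfold sumd. apply fold_le. intros i Hi. apply H, in_seq1, Hi. Qed.

Lemma sumd_lin d f g a b : sumd d (fun i => a * f i + b * g i) = a * sumd d f + b * sumd d g.
Proof. unfold sumd. apply fold_lin. Qed.

Lemma sumd_scal d f a : sumd d (fun i => a * f i) = a * sumd d f.
Proof. unfold sumd. apply fold_scal. Qed.

Lemma Rpower_pos t q : 0 < Rpower t q.
Proof. unfold Rpower. apply exp_pos. Qed.

Lemma Qf_scal d p t v c : Qf d p t (fun i => c * v i) = c ^ 2 * Qf d p t v.
Proof.
  unfold Qf.
  rewrite (sumd_ext d (fun i => Rpower t (2 * p i) * (c * v i) ^ 2)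
                      (fun i => c ^ 2 * (Rpower t (2 * p i) * v i ^ 2))).
  rewrite sumd_scal. ring. intros; ring.
Qed.

Lemma Qf_ext d p t v w : v 0%nat = w 0%nat -> (forall i, (1 <= i <= d)%nat -> v i = w i) ->
  Qf d p t v = Qf d p t w.
Proof.
  intros H0 H. unfold Qf. rewrite H0. f_equal. apply sumd_ext. intros i Hi. rewrite H; auto.
Qed.

Lemma Qf_convex d p t a b m : 0 <= m <= 1 -> a 0%nat = b 0%nat ->
  Qf d p t (fun i => (1 - m) * a i + m * b i) <= (1 - m) * Qf d p t a + m * Qf d p t b.
Proof.
  intros Hm H0. unfold Qf. rewrite H0.
  assert (E : (1 - m) * (- b 0%nat ^ 2 + sumd d (fun i => Rpower t (2 * p i) * a i ^ 2)) +
     m * (- b 0%nat ^ 2 + sumd d (fun i => Rpower t (2 * p i) * b i ^ 2)) =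
     - b 0%nat ^ 2 + ((1-m) * sumd d (fun i => Rpower t (2 * p i) * a i ^ 2) +
         m * sumd d (fun i => Rpower t (2 * p i) * b i ^ 2))) by ring.
  rewrite E. rewrite <- sumd_lin.
  replace (((1 - m) * b 0%nat + m * b 0%nat) ^ 2) with (b 0%nat ^ 2) by ring.
  apply Rplus_le_compat_l. apply sumd_le. intros i _.
  assert (Hp := Rpower_pos t (2 * p i)).
  assert (0 <= Rpower t (2 * p i) * (m * (1 - m) * (a i - b i) ^ 2)).
  { apply Rmult_le_pos; [lra|]. apply Rmult_le_pos; [nra|]. apply pow2_ge_0. }
  nra.
Qed.

Lemma fin_pos (n : nat) (P : nat -> R -> Prop) :
  (forall i x y, 0 < y <= x -> P i x -> P i y) ->
  (forall i, (i < n)%nat -> exists x, 0 < x /\ P i x) ->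
  exists x, 0 < x /\ forall i, (i < n)%nat -> P i x.
Proof.
  intros Hm. induction n as [|n IH]; intros H.
  - exists 1. split; [lra|]. intros; lia.
  - destruct IH as [x [Hx HP]]. { intros i Hi; apply H; lia. }
    destruct (H n ltac:(lia)) as [y [Hy HPy]].
    exists (Rmin x y). split. { apply Rmin_pos; auto. }
    intros i Hi. destruct (Nat.eq_dec i n) as [->|Hne].
    + apply (Hm n y); auto. split; [apply Rmin_pos; auto| apply Rmin_r].
    + apply (Hm i x); [split; [apply Rmin_pos; auto| apply Rmin_l]|]. apply HP; lia.
Qed.

Lemma smooth_loc f : smooth f -> forall x n, locally x (fun y => forall k, (k <= n)%nat -> ex_derive_n f k y).
Proof. intros H x n. apply filter_forall. intros y k _. apply H. Qed.

Lemma smooth_plus f g : smooth f -> smooth g -> smooth (fun x => f x + g x).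
Proof. intros Hf Hg n x. apply ex_derive_n_plus; apply smooth_loc; auto. Qed.

Lemma smooth_scal f a : smooth f -> smooth (fun x => a * f x).
Proof. intros Hf n x. apply ex_derive_n_scal_l. apply Hf. Qed.

Lemma smooth_const a : smooth (fun _ => a).
Proof. intros n x. apply ex_derive_n_const. Qed.

Lemma smooth_id : smooth (fun x => x).
Proof. intros n x. apply (ex_derive_n_ext (fun x => x ^ 1)). { intros; ring. } apply ex_derive_n_pow. Qed.

Lemma smooth_affine A x0 c : smooth (fun x => A + (x - x0) * c).
Proof.
  apply (smooth_plus (fun _ => A)). apply smooth_const.
  intros n x. apply (ex_derive_n_ext (fun x => c * x + c * (- x0))). { intros; ring. }
  apply (smooth_plus (fun x => c * x) (fun _ => c * - x0)).
  apply smooth_scal, smooth_id. apply smooth_const.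
Qed.

Lemma smooth_ex_derive f x : smooth f -> ex_derive f x.
Proof. intros H. exact (H 1%nat x). Qed.

Lemma smooth_cont f x : smooth f -> continuity_pt f x.
Proof.
  intros H. apply continuity_pt_filterlim. exact (ex_derive_continuous f x (smooth_ex_derive f x H)).
Qed.

Lemma smooth_Derive_cont f x : smooth f -> continuity_pt (Derive f) x.
Proof.
  intros H. apply continuity_pt_filterlim. exact (ex_derive_continuous (Derive f) x (H 2%nat x)).
Qed.

Lemma Derive_lin f g a b x : smooth f -> smooth g ->
  Derive (fun y => a * f y + b * g y) x = a * Derive f x + b * Derive g x.
Proof.
  intros Hf Hg. rewrite Derive_plus. rewrite !Derive_scal. reflexivity.
  apply ex_derive_scal, smooth_ex_derive, Hf. apply ex_derive_scal, smooth_ex_derive, Hg.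
Qed.

Lemma Derive_affine A x0 c x : Derive (fun y => A + (y - x0) * c) x = c.
Proof.
  apply is_derive_unique. auto_derive; auto. ring.
Qed.


Definition SI (K : nat) (z : nat -> R) : Prop := forall j, (j < K)%nat -> z j < z (S j).

Lemma SI_lt K z i j : SI K z -> (i < j)%nat -> (j <= K)%nat -> z i < z j.
Proof.
  intros H Hij. induction j as [|j IH]; [lia|]. intros Hj.
  destruct (Nat.eq_dec i j) as [->|Hne]. apply H; lia.
  assert (z i < z j) by (apply IH; lia). assert (z j < z (S j)) by (apply H; lia). lra.
Qed.

Lemma SI_le K z i j : SI K z -> (i <= j)%nat -> (j <= K)%nat -> z i <= z j.
Proof.
  intros H Hij Hj. destruct (Nat.eq_dec i j) as [->|]. lra.
  left. apply (SI_lt K); auto; lia.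
Qed.

Lemma SI_rev K z i j : SI K z -> (i <= K)%nat -> (j <= K)%nat -> z i < z j -> (i < j)%nat.
Proof.
  intros H Hi Hj Hz. destruct (Nat.lt_ge_cases i j); auto.
  assert (z j <= z i) by (apply (SI_le K); auto). lra.
Qed.

Lemma SI_inj K z i j : SI K z -> (i <= K)%nat -> (j <= K)%nat -> z i = z j -> i = j.
Proof.
  intros H Hi Hj Hz. destruct (Nat.lt_total i j) as [h|[h|h]]; auto.
  - assert (z i < z j) by (apply (SI_lt K); auto). lra.
  - assert (z j < z i) by (apply (SI_lt K); auto). lra.
Qed.

Lemma find_interval K z x : SI K z -> z 0%nat <= x <= z K ->
  (exists m, (m <= K)%nat /\ z m = x) \/ (exists m, (m < K)%nat /\ z m < x < z (S m)).
Proof.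
  intros HS. induction K as [|K IH]; intros Hx.
  - left. exists 0%nat. split; auto. lra.
  - destruct (Rle_lt_dec x (z K)) as [h|h].
    + destruct IH as [[m [Hm E]]|[m [Hm E]]].
      { intros j Hj; apply HS; lia. } { lra. }
      * left; exists m; split; auto; lia.
      * right; exists m; split; auto; lia.
    + destruct (Req_dec x (z (S K))) as [E|E].
      * left; exists (S K); split; auto.
      * right; exists K; split; [lia|]. lra.
Qed.

Definition ins (z : nat -> R) (m : nat) (x : R) (j : nat) : R :=
  if (j <=? m)%nat then z j else if (j =? S m)%nat then x else z (pred j).

Lemma ins_lo z m x j : (j <= m)%nat -> ins z m x j = z j.
Proof. intros H. unfold ins. apply Nat.leb_le in H. rewrite H. auto. Qed.
Lemma ins_mid z m x : ins z m x (S m) = x.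
Proof. unfold ins. destruct (S m <=? m)%nat eqn:E. apply Nat.leb_le in E; lia. rewrite Nat.eqb_refl. auto. Qed.
Lemma ins_hi z m x j : (S m < j)%nat -> ins z m x j = z (pred j).
Proof. intros H. unfold ins. destruct (j <=? m)%nat eqn:E. apply Nat.leb_le in E; lia.
  destruct (j =? S m)%nat eqn:E2. apply Nat.eqb_eq in E2; lia. auto. Qed.
Global Opaque ins.

Lemma insert_node K z x : SI K z -> z 0%nat <= x <= z K ->
  exists K' z', z' 0%nat = z 0%nat /\ z' K' = z K /\ SI K' z' /\
    (forall m, (m <= K)%nat -> exists m', (m' <= K')%nat /\ z' m' = z m) /\
    (exists m', (m' <= K')%nat /\ z' m' = x).
Proof.
  intros HS Hx. destruct (find_interval K z x HS Hx) as [[m [Hm E]]|[m [Hm E]]].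
  - exists K, z. repeat split; auto. intros m' Hm'. exists m'; auto. exists m; auto.
  - exists (S K), (ins z m x).
    split; [apply ins_lo; lia|]. split; [rewrite ins_hi by lia; reflexivity|].
    split; [|split].
    + intros j Hj.
      destruct (Nat.lt_total j m) as [h|[h|h]].
      * rewrite !ins_lo by lia. apply HS; lia.
      * subst j. rewrite ins_lo, ins_mid by lia. lra.
      * destruct (Nat.eq_dec j (S m)) as [->|hn].
        -- rewrite ins_mid, ins_hi by lia. simpl. lra.
        -- rewrite !ins_hi by lia. destruct j as [|j]; [lia|]. simpl. apply HS; lia.
    + intros m' Hm'. destruct (Nat.le_gt_cases m' m).
      * exists m'. split; [lia|]. apply ins_lo; auto.
      * exists (S m'). split; [lia|]. rewrite ins_hi by lia. reflexivity.
    + exists (S m). split; [lia|]. apply ins_mid.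
Qed.

Lemma merge_nodes (al be : R) (L : list R) : al < be ->
  (forall x, In x L -> al <= x <= be) ->
  exists K z, z 0%nat = al /\ z K = be /\ SI K z /\
    forall x, In x L -> exists m, (m <= K)%nat /\ z m = x.
Proof.
  intros Hab. induction L as [|y L IH]; intros HL.
  - exists 1%nat, (fun j => if (j =? 0)%nat then al else be). repeat split; auto.
    intros j Hj. assert (j = 0%nat) by lia. subst. simpl. lra.
    intros x [].
  - destruct IH as [K [z [H0 [HK [HS Hn]]]]]. { intros x Hx; apply HL; right; auto. }
    assert (Hy := HL y (or_introl eq_refl)).
    destruct (insert_node K z y HS) as [K' [z' [H0' [HK' [HS' [Hold Hnew]]]]]]. lra.
    exists K', z'. repeat split; try congruence. auto.
    intros x [<-|Hx]. auto.
    destruct (Hn x Hx) as [m [Hm E]]. destruct (Hold m Hm) as [m' [Hm' E']].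
    exists m'. split; auto. congruence.
Qed.

Lemma grid_exists (al be h : R) (L : list R) : al < be -> 0 < h ->
  (forall x, In x L -> al <= x <= be) ->
  exists K z, z 0%nat = al /\ z K = be /\ SI K z /\
    (forall x, In x L -> exists m, (m <= K)%nat /\ z m = x) /\
    (forall k, (k < K)%nat -> z (S k) - z k <= h).
Proof.
  intros Hab Hh HL.
  destruct (INR_archimed h (be - al) Hh) as [M HM].
  assert (HM0 : (0 < M)%nat). { destruct M. simpl in HM. lra. lia. }
  assert (HMr : 0 < INR M) by (apply lt_0_INR; auto).
  set (g := (be - al) / INR M).
  assert (Hg : 0 < g) by (unfold g; apply Rdiv_lt_0_compat; lra).
  assert (Hgh : g <= h). { unfold g. apply Rle_div_l; auto. lra. }
  set (u := fun m : nat => al + INR m * g).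
  assert (HuS : SI M u). { intros j _. unfold u. rewrite S_INR. lra. }
  assert (Hu0 : u 0%nat = al) by (unfold u; simpl; ring).
  assert (HuM : u M = be). { unfold u, g. field. lra. }
  destruct (merge_nodes al be (L ++ map u (seq 0 (S M))) Hab) as [K [z [H0 [HK [HS Hn]]]]].
  { intros x Hx. apply in_app_or in Hx. destruct Hx as [Hx|Hx]; auto.
    apply in_map_iff in Hx. destruct Hx as [m [<- Hm]]. apply in_seq in Hm.
    split; [rewrite <- Hu0 | rewrite <- HuM]; apply (SI_le M); auto; lia. }
  exists K, z. repeat split; auto.
  { intros x Hx. apply Hn. apply in_or_app. auto. }
  intros k Hk.
  assert (Hzk : al <= z k < be).
  { split. rewrite <- H0. apply (SI_le K); auto; lia.
    rewrite <- HK. apply (SI_lt K); auto. }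
  destruct (find_interval M u (z k) HuS) as [[m [Hm E]]|[m [Hm E]]]. lra.
  - assert (m < M)%nat. { destruct (Nat.eq_dec m M) as [e|]; [rewrite e in E; lra|lia]. }
    destruct (Hn (u (S m))) as [j [Hj Ej]].
    { apply in_or_app; right. apply in_map. apply in_seq. lia. }
    assert (z k < z j) by (rewrite Ej, <- E; apply HuS; auto).
    assert (k < j)%nat by (apply (SI_rev K z); auto; lia).
    assert (z (S k) <= z j) by (apply (SI_le K); auto; lia).
    assert (u (S m) - u m = g) by (unfold u; rewrite S_INR; ring). lra.
  - destruct (Hn (u (S m))) as [j [Hj Ej]].
    { apply in_or_app; right. apply in_map. apply in_seq. lia. }
    assert (z k < z j) by lra.
    assert (k < j)%nat by (apply (SI_rev K z); auto; lia).
    assert (z (S k) <= z j) by (apply (SI_le K); auto; lia).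
    assert (u (S m) - u m = g) by (unfold u; rewrite S_INR; ring). lra.
Qed.


Definition clamp (a b x : R) : R := Rmax a (Rmin b x).

Lemma clamp_in a b x : a <= b -> a <= clamp a b x <= b.
Proof. intros H. unfold clamp, Rmax, Rmin. repeat destruct Rle_dec; lra. Qed.

Lemma clamp_id a b x : a <= x <= b -> clamp a b x = x.
Proof. intros H. unfold clamp, Rmax, Rmin. repeat destruct Rle_dec; lra. Qed.

Lemma clamp_lip a b x y : a <= b -> Rabs (clamp a b x - clamp a b y) <= Rabs (x - y).
Proof.
  intros H. unfold clamp, Rmax, Rmin.
  repeat destruct Rle_dec; unfold Rabs; repeat destruct Rcase_abs; lra.
Qed.

Lemma cont_eps f x : continuity_pt f x <->
  (forall eps, 0 < eps -> exists del, 0 < del /\ forall y, Rabs (y - x) < del -> Rabs (f y - f x) < eps).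
Proof.
  split.
  - intros H eps Heps. destruct (H eps Heps) as [al [Hal Hy]].
    exists al. split; auto. intros y Hyx.
    destruct (Req_dec y x) as [->|Hne]. rewrite Rminus_diag, Rabs_R0. auto.
    apply (Hy y). split. split. exact I. auto. exact Hyx.
  - intros H eps Heps. destruct (H eps Heps) as [al [Hal Hy]].
    exists al. split; auto. intros y [_ Hyx]. apply Hy, Hyx.
Qed.

Lemma clamp_cont a b x : a <= b -> continuity_pt (clamp a b) x.
Proof.
  intros H. apply cont_eps. intros eps He. exists eps. split; auto.
  intros y Hy. eapply Rle_lt_trans. apply clamp_lip; auto. auto.
Qed.

Lemma paste_cont (A B : R -> R) c x :
  (forall y, continuity_pt A y) -> (forall y, continuity_pt B y) -> A c = B c ->
  continuity_pt (fun y => if Rle_dec y c then A y else B y) x.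
Proof.
  intros HA HB Hc. apply cont_eps. intros eps He.
  destruct (proj1 (cont_eps A x) (HA x) eps He) as [d1 [Hd1 H1]].
  destruct (proj1 (cont_eps B x) (HB x) eps He) as [d2 [Hd2 H2]].
  destruct (Rtotal_order x c) as [Hx|[Hx|Hx]].
  - exists (Rmin d1 (c - x)). split. apply Rmin_pos; lra.
    intros y Hy. assert (Hm1 := Rmin_l d1 (c - x)). assert (Hm2 := Rmin_r d1 (c - x)).
    destruct (Rle_dec y c). 2:{ exfalso. unfold Rabs in Hy; destruct Rcase_abs in Hy; lra. }
    destruct (Rle_dec x c); [|lra]. apply H1. lra.
  - subst x. exists (Rmin d1 d2). split. apply Rmin_pos; lra.
    intros y Hy. assert (Hm1 := Rmin_l d1 d2). assert (Hm2 := Rmin_r d1 d2).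
    destruct (Rle_dec c c); [|lra]. destruct (Rle_dec y c).
    + apply H1. lra.
    + rewrite Hc. apply H2. lra.
  - exists (Rmin d2 (x - c)). split. apply Rmin_pos; lra.
    intros y Hy. assert (Hm1 := Rmin_l d2 (x - c)). assert (Hm2 := Rmin_r d2 (x - c)).
    destruct (Rle_dec y c). { exfalso. unfold Rabs in Hy; destruct Rcase_abs in Hy; lra. }
    destruct (Rle_dec x c); [lra|]. apply H2. lra.
Qed.

Lemma cont_ext f g x : (forall y, f y = g y) -> continuity_pt f x -> continuity_pt g x.
Proof.
  intros E H. apply cont_eps. intros eps He. destruct (proj1 (cont_eps f x) H eps He) as [d [Hd Hy]].
  exists d. split; auto. intros y Hyx. rewrite <- !E. auto.
Qed.

Lemma cont_comp f g x : continuity_pt f x -> continuity_pt g (f x) -> continuity_pt (fun y => g (f y)) x.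
Proof. intros H1 H2. apply (continuity_pt_comp f g x H1 H2). Qed.


Definition piece_ok d p (s : nat -> R) (f : nat -> nat -> R -> R) (g : R -> pt) (j : nat) : Prop :=
  (forall i, (i <= d)%nat -> smooth (f j i)) /\
  (forall u, s j <= u <= s (S j) ->
     (forall i, (i <= d)%nat -> g u i = f j i u) /\ in_M (g u) /\
     FDTL_vector d p (g u) (fun i => Derive (f j i) u)).

Definition CD d p a b (g : R -> pt) k s f : Prop :=
  s 0%nat = a /\ s k = b /\ SI k s /\ forall j, (j < k)%nat -> piece_ok d p s f g j.

Lemma FDTL_curve_iff d p a b g : FDTL_curve d p a b g <-> a < b /\ exists k s f, CD d p a b g k s f.
Proof. unfold FDTL_curve, CD, piece_ok, SI. tauto. Qed.

Section Curve.
Variables (d : nat) (p : nat -> R) (a b : R) (g : R -> pt) (k : nat) (s : nat -> R)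
  (f : nat -> nat -> R -> R).
Hypothesis Hab : a < b.
Hypothesis HCD : CD d p a b g k s f.

Lemma CD_k : (0 < k)%nat.
Proof. destruct HCD as [H0 [Hk _]]. destruct k. rewrite H0 in Hk. lra. lia. Qed.

Lemma CD_s_in j : (j <= k)%nat -> a <= s j <= b.
Proof.
  destruct HCD as [H0 [Hk [HS _]]]. intros Hj. split.
  rewrite <- H0. apply (SI_le k); auto; lia. rewrite <- Hk. apply (SI_le k); auto.
Qed.

Lemma curve_cont_aux i : (i <= d)%nat -> forall n, (1 <= n <= k)%nat -> forall x,
  continuity_pt (fun y => g (clamp a (s n) y) i) x.
Proof.
  destruct HCD as [H0 [Hk [HS HP]]]. intros Hi n Hn. induction n as [|n IH]; [lia|].
  intros x.
  destruct (Nat.eq_dec n 0) as [->|Hn0].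
  - destruct (HP 0%nat ltac:(lia)) as [Hsm Hpc].
    apply (cont_ext (fun y => f 0%nat i (clamp a (s 1%nat) y))).
    { intros y. symmetry. apply Hpc; auto. rewrite H0. apply clamp_in.
      rewrite <- H0. left. apply HS. lia. }
    apply cont_comp. apply clamp_cont. rewrite <- H0; left; apply HS; lia.
    apply smooth_cont, Hsm, Hi.
  - destruct (HP n ltac:(lia)) as [Hsm Hpc].
    assert (Han : a <= s n) by (rewrite <- H0; apply (SI_le k); auto; lia).
    assert (Hnn : s n < s (S n)) by (apply HS; lia).
    apply (cont_ext (fun y => if Rle_dec y (s n) then g (clamp a (s n) y) i
                              else f n i (clamp (s n) (s (S n)) y))).
    { intros y. destruct (Rle_dec y (s n)).
      - replace (clamp a (s (S n)) y) with (clamp a (s n) y); [reflexivity|].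
        unfold clamp, Rmax, Rmin. repeat destruct Rle_dec; lra.
      - replace (clamp a (s (S n)) y) with (clamp (s n) (s (S n)) y).
        symmetry; apply (proj1 (Hpc _ (clamp_in _ _ y (Rlt_le _ _ Hnn))) i Hi).
        unfold clamp, Rmax, Rmin. repeat destruct Rle_dec; lra. }
    apply paste_cont.
    + intros y. apply IH. lia.
    + intros y. apply cont_comp. apply clamp_cont; lra. apply smooth_cont, Hsm, Hi.
    + rewrite clamp_id by lra. rewrite clamp_id by lra.
      apply (proj1 (Hpc (s n) ltac:(lra)) i Hi).
Qed.

Lemma curve_cont i x : (i <= d)%nat -> continuity_pt (fun y => g (clamp a b y) i) x.
Proof.
  intros Hi. destruct HCD as [H0 [Hk _]]. rewrite <- Hk.
  apply curve_cont_aux; auto. assert (H := CD_k). lia.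
Qed.

Lemma piece_mono j x y : (j < k)%nat -> s j <= x -> x < y -> y <= s (S j) -> g x 0%nat < g y 0%nat.
Proof.
  destruct HCD as [H0 [Hk [HS HP]]]. intros Hj Hx Hxy Hy.
  destruct (HP j Hj) as [Hsm Hpc].
  rewrite (proj1 (Hpc x ltac:(lra)) 0%nat ltac:(lia)).
  rewrite (proj1 (Hpc y ltac:(lra)) 0%nat ltac:(lia)).
  destruct (MVT_gen (f j 0%nat) x y (Derive (f j 0%nat))) as [c [Hc E]].
  - intros z _. apply Derive_correct. apply smooth_ex_derive, Hsm. lia.
  - intros z _. apply smooth_cont, Hsm. lia.
  - rewrite Rmin_left in Hc by lra. rewrite Rmax_right in Hc by lra.
    destruct (Hpc c ltac:(lra)) as [_ [_ [Hv _]]]. simpl in Hv.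
    assert (0 < Derive (f j 0%nat) c * (y - x)) by (apply Rmult_lt_0_compat; lra). lra.
Qed.

Lemma curve_mono x y : a <= x -> x < y -> y <= b -> g x 0%nat < g y 0%nat.
Proof.
  assert (Hk' := CD_k).
  destruct HCD as [H0 [Hk [HS HP]]].
  assert (C : forall n, (n <= k)%nat -> forall x y, a <= x -> x < y -> y <= s n -> g x 0%nat < g y 0%nat).
  { induction n as [|n IH]; intros Hn x0 y0 Hx Hxy Hy.
    - rewrite H0 in Hy. lra.
    - destruct (Rle_dec y0 (s n)). apply IH; auto; lia.
      destruct (Rle_dec (s n) x0).
      + apply (piece_mono n); auto; try lia; lra.
      + assert (Han : a <= s n) by (rewrite <- H0; apply (SI_le k); auto; lia).
        assert (g x0 0%nat < g (s n) 0%nat) by (apply IH; auto; try lia; lra).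
        assert (g (s n) 0%nat < g y0 0%nat) by (apply (piece_mono n); auto; try lia; lra).
        lra. }
  intros. apply (C k); auto. lra.
Qed.

Lemma curve_ivt z : g a 0%nat <= z <= g b 0%nat -> exists x, a <= x <= b /\ g x 0%nat = z.
Proof.
  intros Hz.
  assert (Hc : continuity (fun y => g (clamp a b y) 0%nat)).
  { intros x. apply curve_cont. lia. }
  destruct (IVT_gen _ a b z Hc) as [x [Hx E]].
  { rewrite !clamp_id by lra. rewrite Rmin_left, Rmax_right; auto; left; apply curve_mono; lra. }
  rewrite Rmin_left, Rmax_right in Hx by lra.
  exists x. split; auto. rewrite clamp_id in E; auto.
Qed.

Lemma curve_inj x y : a <= x <= b -> a <= y <= b -> g x 0%nat = g y 0%nat -> x = y.
Proof.
  intros Hx Hy E. destruct (Rtotal_order x y) as [h|[h|h]]; auto.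
  - assert (g x 0%nat < g y 0%nat) by (apply curve_mono; lra). lra.
  - assert (g y 0%nat < g x 0%nat) by (apply curve_mono; lra). lra.
Qed.

End Curve.


Lemma Rpower_cont q x : 0 < x -> continuity_pt (fun y => Rpower y q) x.
Proof.
  intros Hx. apply continuity_pt_filterlim.
  apply (ex_derive_continuous (fun y => Rpower y q) x).
  unfold Rpower. auto_derive. auto.
Qed.

Lemma Rabs_cont x : continuity_pt Rabs x.
Proof.
  apply cont_eps. intros eps He. exists eps. split; auto. intros y Hy.
  eapply Rle_lt_trans. apply Rabs_triang_inv2. auto.
Qed.

Lemma Rpower_between lo hi t q : 0 < lo -> lo <= t <= hi ->
  Rpower t q <= Rmax (Rpower hi q) (Rpower lo q).
Proof.
  intros Hlo Ht. unfold Rpower.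
  assert (H1 : ln lo <= ln t) by (apply ln_le; lra).
  assert (H2 : ln t <= ln hi) by (apply ln_le; lra).
  destruct (Rle_dec 0 q).
  - eapply Rle_trans; [|apply Rmax_l].
    destruct (Req_dec (q * ln t) (q * ln hi)) as [E|E]. rewrite E; lra.
    left. apply exp_increasing. assert (q * ln t <= q * ln hi) by (apply Rmult_le_compat_l; auto). lra.
  - eapply Rle_trans; [|apply Rmax_r].
    destruct (Req_dec (q * ln t) (q * ln lo)) as [E|E]. rewrite E; lra.
    left. apply exp_increasing. assert (q * ln t <= q * ln lo) by nra. lra.
Qed.

Lemma c2_1 (h : R -> R) x y : continuity_pt h x -> continuity_2d_pt (fun u _ => h u) x y.
Proof.
  intros H. apply (continuity_1d_2d_pt_comp h (fun u _ => u)); auto. apply continuity_2d_pt_id1.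
Qed.

Lemma c2_comp (h : R -> R) (F : R -> R -> R) x y : continuity_pt h (F x y) -> continuity_2d_pt F x y ->
  continuity_2d_pt (fun u v => h (F u v)) x y.
Proof. intros. apply continuity_1d_2d_pt_comp; auto. Qed.

Lemma c2_Rmax F G x y : continuity_2d_pt F x y -> continuity_2d_pt G x y ->
  continuity_2d_pt (fun u v => Rmax (F u v) (G u v)) x y.
Proof.
  intros HF HG.
  apply (continuity_2d_pt_ext (fun u v => (F u v + G u v + Rabs (F u v - G u v)) * / 2)).
  { intros u v. unfold Rmax, Rabs. destruct Rle_dec, Rcase_abs; lra. }
  apply continuity_2d_pt_mult; [|apply continuity_2d_pt_const].
  apply continuity_2d_pt_plus. apply continuity_2d_pt_plus; auto.
  apply c2_comp. apply Rabs_cont. apply continuity_2d_pt_minus; auto.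
Qed.

Lemma c2_fold (l : list nat) (G : nat -> R -> R -> R) x y :
  (forall i, In i l -> continuity_2d_pt (G i) x y) ->
  continuity_2d_pt (fun u v => fold_right Rplus 0 (map (fun i => G i u v) l)) x y.
Proof.
  induction l as [|j l IH]; intros H; simpl.
  - apply continuity_2d_pt_const.
  - apply continuity_2d_pt_plus. apply H; left; auto. apply IH. intros; apply H; right; auto.
Qed.

Lemma c2_sumd d (G : nat -> R -> R -> R) x y :
  (forall i, (1 <= i <= d)%nat -> continuity_2d_pt (G i) x y) ->
  continuity_2d_pt (fun u v => sumd d (fun i => G i u v)) x y.
Proof. intros H. unfold sumd. apply c2_fold. intros i Hi. apply H, in_seq1, Hi. Qed.

Lemma c2_restrict F x y : continuity_2d_pt F x y -> continuity_pt (fun u => F u y) x.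
Proof.
  intros H. apply cont_eps. intros eps He. destruct (H (mkposreal eps He)) as [del Hd].
  exists del. split. apply cond_pos. intros u Hu. apply Hd; auto. rewrite Rminus_diag, Rabs_R0. apply cond_pos.
Qed.

Section Margin.
Variables (d : nat) (p : nat -> R) (al be : R) (F : nat -> R -> R).
Hypothesis Hab : al < be.
Hypothesis Hsm : forall i, (i <= d)%nat -> smooth (F i).
Hypothesis Hgood : forall s, al <= s <= be ->
  0 < F 0%nat s /\ 0 < Derive (F 0%nat) s /\ Qf d p (F 0%nat s) (fun i => Derive (F i) s) < 0.

Let T := F 0%nat.
Let W i := Derive (F i).
Let Phi (s e : R) : R :=
  - (W 0%nat s - e) ^ 2 + sumd d (fun i =>
      Rmax (Rpower (T s + e) (2 * p i)) (Rpower (T s - e) (2 * p i)) * (Rabs (W i s) + e) ^ 2).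

Lemma Phi_cont s : al <= s <= be -> continuity_2d_pt Phi s 0.
Proof.
  intros Hs. destruct (Hgood s Hs) as [HT _].
  unfold Phi. apply continuity_2d_pt_plus.
  - apply continuity_2d_pt_opp. simpl. apply continuity_2d_pt_mult.
    apply continuity_2d_pt_minus. apply c2_1. apply smooth_Derive_cont, Hsm; lia. apply continuity_2d_pt_id2.
    apply continuity_2d_pt_mult. 2: apply continuity_2d_pt_const.
    apply continuity_2d_pt_minus. apply c2_1. apply smooth_Derive_cont, Hsm; lia. apply continuity_2d_pt_id2.
  - apply c2_sumd. intros i Hi. apply continuity_2d_pt_mult.
    + apply c2_Rmax.
      * apply (c2_comp (fun x => Rpower x (2 * p i))). apply Rpower_cont. unfold T in *. lra.
        apply continuity_2d_pt_plus. apply c2_1. apply smooth_cont, Hsm; lia. apply continuity_2d_pt_id2.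
      * apply (c2_comp (fun x => Rpower x (2 * p i))). apply Rpower_cont. unfold T in *. lra.
        apply continuity_2d_pt_minus. apply c2_1. apply smooth_cont, Hsm; lia. apply continuity_2d_pt_id2.
    + simpl. apply continuity_2d_pt_mult. 2: apply continuity_2d_pt_mult; [|apply continuity_2d_pt_const].
      all: apply continuity_2d_pt_plus; [|apply continuity_2d_pt_id2].
      all: apply (c2_comp Rabs (fun u _ => W i u)); [apply Rabs_cont|].
      all: apply c2_1; apply smooth_Derive_cont, Hsm; lia.
Qed.

Lemma Phi0 s : Phi s 0 = Qf d p (T s) (fun i => W i s).
Proof.
  unfold Phi, Qf. rewrite Rminus_0_r. f_equal. apply sumd_ext. intros i _.
  rewrite Rplus_0_r, Rminus_0_r, Rmax_left by lra. f_equal.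
  rewrite Rplus_0_r. rewrite <- (pow2_abs (W i s)). reflexivity.
Qed.

Lemma margin : exists eps, 0 < eps /\ forall s, al <= s <= be -> forall t v,
  Rabs (t - F 0%nat s) <= eps -> (forall i, (i <= d)%nat -> Rabs (v i - Derive (F i) s) <= eps) ->
  Qf d p t v < 0.
Proof.
  destruct (continuity_ab_maj (fun s => Phi s 0) al be) as [sM [HM HsM]]. lra.
  { intros c Hc. apply c2_restrict, Phi_cont, Hc. }
  assert (HMneg : Phi sM 0 < 0) by (rewrite Phi0; apply Hgood; auto).
  destruct (continuity_ab_min (W 0%nat) al be) as [s1 [Hm1 Hs1]]. lra.
  { intros c Hc. apply smooth_Derive_cont, Hsm. lia. }
  destruct (continuity_ab_min T al be) as [s2 [Hm2 Hs2]]. lra.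
  { intros c Hc. apply smooth_cont, Hsm. lia. }
  assert (Hc0 : 0 < W 0%nat s1) by (apply Hgood; auto).
  assert (Ht0 : 0 < T s2) by (apply Hgood; auto).
  set (m := - Phi sM 0).
  assert (Hm : 0 < m) by (unfold m; lra).
  destruct (uniform_continuity_2d_1d Phi al be 0 (fun x Hx => Phi_cont x Hx) (mkposreal m Hm)) as [del Hdel].
  assert (Hdp := cond_pos del).
  set (eps := Rmin del (Rmin (W 0%nat s1) (T s2 / 2))).
  assert (He1 : eps <= del) by apply Rmin_l.
  assert (He2 : eps <= W 0%nat s1) by (eapply Rle_trans; [apply Rmin_r| apply Rmin_l]).
  assert (He3 : eps <= T s2 / 2) by (eapply Rle_trans; [apply Rmin_r| apply Rmin_r]).
  assert (He0 : 0 < eps) by (apply Rmin_pos; [lra| apply Rmin_pos; lra]).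
  exists eps. split; auto.
  intros s Hs t v Ht Hv.
  assert (Hle : Qf d p t v <= Phi s eps).
  { unfold Qf, Phi. fold (T s).
    assert (HW0 := Hm1 s Hs). assert (HT0 := Hm2 s Hs).
    apply Rplus_le_compat.
    - assert (H0 := Hv 0%nat ltac:(lia)). fold (W 0%nat s) in H0.
      assert (W 0%nat s - eps <= v 0%nat) by (unfold Rabs in H0; destruct Rcase_abs in H0; lra).
      assert (0 <= W 0%nat s - eps) by lra. simpl. nra.
    - apply sumd_le. intros i Hi.
      apply Rmult_le_compat.
      + left; apply Rpower_pos.
      + apply pow2_ge_0.
      + apply Rpower_between. lra. unfold T in *. unfold Rabs in Ht; destruct Rcase_abs in Ht; lra.
      + assert (H0 := Hv i ltac:(lia)). fold (W i s) in H0.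
        assert (Rabs (v i) <= Rabs (W i s) + eps).
        { replace (v i) with (W i s + (v i - W i s)) by ring.
          eapply Rle_trans. apply Rabs_triang. lra. }
        rewrite <- (pow2_abs (v i)). assert (0 <= Rabs (v i)) by apply Rabs_pos. nra. }
  assert (Hc := Hdel s 0 s eps Hs ltac:(lra) Hs ltac:(lra) ltac:(rewrite Rminus_diag, Rabs_R0; lra)).
  simpl in Hc. assert (HsM' := HM s Hs). simpl in HsM'.
  unfold Rabs in Hc; destruct Rcase_abs in Hc; unfold m in Hc; lra.
Qed.

Definition chord (x y : R) (i : nat) : R := (F i y - F i x) / (y - x).

Lemma seg_lemma : exists eta, 0 < eta /\ forall x y, al <= x -> x < y -> y <= be -> y - x <= eta ->
  (forall l s, 0 <= l <= 1 -> x <= s <= y ->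
     Qf d p ((1 - l) * F 0%nat s + l * (F 0%nat x + (s - x) * chord x y 0%nat))
            (fun i => (1 - l) * Derive (F i) s + l * chord x y i) < 0) /\
  (forall t, Rabs (t - F 0%nat x) <= Rabs (F 0%nat y - F 0%nat x) -> Qf d p t (chord x y) < 0).
Proof.
  destruct margin as [eps [He Hm]].
  assert (He2 : 0 < eps / 2) by lra.
  destruct (fin_pos (S (S d)) (fun i del => forall x y, al <= x <= be -> al <= y <= be -> Rabs (x - y) < del ->
      (i <= d)%nat /\ Rabs (Derive (F i) x - Derive (F i) y) < eps \/
      i = S d /\ Rabs (F 0%nat x - F 0%nat y) < eps / 2)) as [del [Hdel Hall]].
  { intros i x y Hy Hx x0 y0 H1 H2 H3. apply Hx; auto. lra. }
  { intros i Hi. destruct (Nat.eq_dec i (S d)) as [->|Hne].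
    - destruct (Heine_cor2 (f := F 0%nat) (a := al) (b := be)
         (fun x _ => smooth_cont _ x (Hsm 0%nat ltac:(lia))) (mkposreal _ He2)) as [del Hd].
      exists del. split. apply cond_pos. intros x y Hx Hy Hxy. right. split; auto.
    - destruct (Heine_cor2 (f := Derive (F i)) (a := al) (b := be)
         (fun x _ => smooth_Derive_cont _ x (Hsm i ltac:(lia))) (mkposreal _ He)) as [del Hd].
      exists del. split. apply cond_pos. intros x y Hx Hy Hxy. left. split; [lia|]. apply Hd; auto. }
  assert (UW : forall i x y, (i <= d)%nat -> al <= x <= be -> al <= y <= be -> Rabs (x - y) < del ->
     Rabs (Derive (F i) x - Derive (F i) y) < eps).
  { intros i x y Hi Hx Hy Hxy. destruct (Hall i ltac:(lia) x y Hx Hy Hxy) as [[_ H]|[H _]]; auto. lia. }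
  assert (UT : forall x y, al <= x <= be -> al <= y <= be -> Rabs (x - y) < del ->
     Rabs (F 0%nat x - F 0%nat y) < eps / 2).
  { intros x y Hx Hy Hxy. destruct (Hall (S d) ltac:(lia) x y Hx Hy Hxy) as [[H _]|[_ H]]; auto. lia. }
  exists (del / 2). split. lra.
  intros x y Hx Hxy Hy Hyx.
  assert (Hc : forall i s, (i <= d)%nat -> x <= s <= y -> Rabs (chord x y i - Derive (F i) s) <= eps).
  { intros i s Hi Hs.
    destruct (MVT_gen (F i) x y (Derive (F i))) as [c [Hcin E]].
    - intros z _. apply Derive_correct. apply smooth_ex_derive, Hsm, Hi.
    - intros z _. apply smooth_cont, Hsm, Hi.
    - rewrite Rmin_left in Hcin by lra. rewrite Rmax_right in Hcin by lra.
      unfold chord. rewrite E. replace (Derive (F i) c * (y - x) / (y - x)) with (Derive (F i) c) by (field; lra).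
      left. apply UW; auto; try lra. unfold Rabs; destruct Rcase_abs; lra. }
  assert (HT : Rabs (F 0%nat y - F 0%nat x) < eps / 2).
  { apply UT; try lra. unfold Rabs; destruct Rcase_abs; lra. }
  split.
  - intros l s Hl Hs. apply (Hm s). lra.
    + set (A := F 0%nat x + (s - x) * chord x y 0%nat).
      assert (HA : Rabs (A - F 0%nat x) <= Rabs (F 0%nat y - F 0%nat x)).
      { unfold A, chord. replace (F 0%nat x + (s - x) * ((F 0%nat y - F 0%nat x) / (y - x)) - F 0%nat x)
          with ((s - x) / (y - x) * (F 0%nat y - F 0%nat x)) by (field; lra).
        rewrite Rabs_mult. assert (0 <= (s - x) / (y - x) <= 1).
        { split. apply Rdiv_le_0_compat; lra. unfold Rdiv. apply (Rmult_le_reg_r (y - x)); [lra|]. rewrite Rmult_assoc, Rinv_l by lra. lra. }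
        rewrite (Rabs_right ((s - x) / (y - x))) by lra.
        assert (0 <= Rabs (F 0%nat y - F 0%nat x)) by apply Rabs_pos. nra. }
      assert (Hs' : Rabs (F 0%nat x - F 0%nat s) < eps / 2).
      { apply UT; try lra. unfold Rabs; destruct Rcase_abs; lra. }
      replace ((1 - l) * F 0%nat s + l * A - F 0%nat s) with (l * ((A - F 0%nat x) + (F 0%nat x - F 0%nat s))) by ring.
      rewrite Rabs_mult, Rabs_right by lra.
      assert (Rabs (A - F 0%nat x + (F 0%nat x - F 0%nat s)) <= eps).
      { eapply Rle_trans. apply Rabs_triang. lra. }
      assert (0 <= Rabs (A - F 0%nat x + (F 0%nat x - F 0%nat s))) by apply Rabs_pos. nra.
    + intros i Hi. replace ((1 - l) * Derive (F i) s + l * chord x y i - Derive (F i) s)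
        with (l * (chord x y i - Derive (F i) s)) by ring.
      rewrite Rabs_mult, Rabs_right by lra.
      assert (H := Hc i s Hi ltac:(lra)). assert (0 <= Rabs (chord x y i - Derive (F i) s)) by apply Rabs_pos. nra.
  - intros t Ht. apply (Hm x). lra. lra. intros i Hi. apply Hc; auto; lra.
Qed.

End Margin.


Fixpoint sumk (g : nat -> R) (K : nat) : R :=
  match K with 0%nat => 0 | S K' => sumk g K' + g K' end.

Lemma sumk_ext g h K : (forall k, (k < K)%nat -> g k = h k) -> sumk g K = sumk h K.
Proof.
  induction K as [|K IH]; intros H; simpl; auto. rewrite IH, H; auto; intros; apply H; lia.
Qed.

Definition PL (K : nat) (rho : nat -> R) (Y : nat -> pt) (s : R) : pt := fun i =>
  Y 0%nat i + sumk (fun k => (Y (S k) i - Y k i) * clamp 0 1 ((s - rho k) / (rho (S k) - rho k))) K.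

Definition slope (rho : nat -> R) (Y : nat -> pt) (k i : nat) : R :=
  (Y (S k) i - Y k i) / (rho (S k) - rho k).

Lemma PL_seg K rho Y k s i : SI K rho -> (k < K)%nat -> rho k <= s <= rho (S k) ->
  PL K rho Y s i = Y k i + (s - rho k) * slope rho Y k i.
Proof.
  intros HS Hk Hs. unfold PL.
  assert (C : forall n, (n <= K)%nat ->
    sumk (fun k0 => (Y (S k0) i - Y k0 i) * clamp 0 1 ((s - rho k0) / (rho (S k0) - rho k0))) n =
    if (n <=? k)%nat then Y n i - Y 0%nat i
    else Y k i - Y 0%nat i + (s - rho k) * slope rho Y k i).
  { induction n as [|n IH]; intros Hn.
    - simpl. ring.
    - simpl sumk. rewrite IH by lia.
      assert (Hpos : rho n < rho (S n)) by (apply HS; lia).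
      destruct (Nat.lt_total n k) as [h|[h|h]].
      + assert (E1 : (n <=? k)%nat = true) by (apply Nat.leb_le; lia).
        assert (E2 : (S n <=? k)%nat = true) by (apply Nat.leb_le; lia).
        rewrite E1, E2.
        assert (rho (S n) <= rho k) by (apply (SI_le K); auto; lia).
        replace (clamp 0 1 ((s - rho n) / (rho (S n) - rho n))) with 1. ring.
        unfold clamp. rewrite Rmin_left. rewrite Rmax_right; lra.
        apply (Rmult_le_reg_r (rho (S n) - rho n)). lra. unfold Rdiv.
        rewrite Rmult_assoc, Rinv_l by lra. lra.
      + subst n. rewrite Nat.leb_refl.
        assert (E2 : (S k <=? k)%nat = false) by (apply Nat.leb_gt; lia). rewrite E2.
        rewrite clamp_id. unfold slope. field. lra.
        split. apply Rdiv_le_0_compat; lra.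
        apply (Rmult_le_reg_r (rho (S k) - rho k)). lra. unfold Rdiv.
        rewrite Rmult_assoc, Rinv_l by lra. lra.
      + assert (E1 : (n <=? k)%nat = false) by (apply Nat.leb_gt; lia).
        assert (E2 : (S n <=? k)%nat = false) by (apply Nat.leb_gt; lia).
        rewrite E1, E2.
        assert (rho (S k) <= rho n) by (apply (SI_le K); auto; lia).
        replace (clamp 0 1 ((s - rho n) / (rho (S n) - rho n))) with 0. ring.
        unfold clamp. rewrite Rmin_right. rewrite Rmax_left. auto.
        apply (Rmult_le_reg_r (rho (S n) - rho n)). lra. unfold Rdiv.
        rewrite Rmult_assoc, Rinv_l by lra. lra.
        apply (Rmult_le_reg_r (rho (S n) - rho n)). lra. unfold Rdiv.
        rewrite Rmult_assoc, Rinv_l by lra. lra. }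
  rewrite C by lia. assert (E : (K <=? k)%nat = false) by (apply Nat.leb_gt; lia). rewrite E. ring.
Qed.

Lemma PL_ext K rho rho' Y Y' s i : (forall m, rho m = rho' m) -> (forall m, Y m i = Y' m i) ->
  PL K rho Y s i = PL K rho' Y' s i.
Proof.
  intros H1 H2. unfold PL. rewrite H2. f_equal. apply sumk_ext. intros m _.
  rewrite !H1, !H2. reflexivity.
Qed.

Lemma fin_choice {A : Type} (x0 : A) (K : nat) (P : nat -> A -> Prop) :
  (forall k, (k < K)%nat -> exists j, P k j) -> exists J : nat -> A, forall k, (k < K)%nat -> P k (J k).
Proof.
  induction K as [|K IH]; intros H.
  - exists (fun _ => x0). intros; lia.
  - destruct IH as [J HJ]. intros; apply H; lia.
    destruct (H K ltac:(lia)) as [j Hj].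
    exists (fun k => if (k =? K)%nat then j else J k). intros k Hk.
    destruct (k =? K)%nat eqn:E. apply Nat.eqb_eq in E; subst; auto.
    apply Nat.eqb_neq in E. apply HJ. lia.
Qed.

Lemma FDTL_curve_ext d p a b h h' : FDTL_curve d p a b h ->
  (forall u, a <= u <= b -> forall i, (i <= d)%nat -> h' u i = h u i) -> FDTL_curve d p a b h'.
Proof.
  intros [Hab [k [s [f [H0 [Hk [HS HP]]]]]]] E. split; auto.
  exists k, s, f. split; [auto|]. split; [auto|]. split; [exact HS|].
  intros j Hj. destruct (HP j Hj) as [Hsm Hpc]. split; auto.
  intros u Hu.
  assert (Hu' : a <= u <= b).
  { split. rewrite <- H0. eapply Rle_trans; [apply (SI_le k s 0 j); auto; lia|lra].
    rewrite <- Hk. eapply Rle_trans; [|apply (SI_le k s (S j) k); auto; lia]. lra. }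
  destruct (Hpc u Hu) as [Ha [Hm [Hv Hg]]]. split; [|split; [|split]].
  - intros i Hi. rewrite E; auto.
  - unfold in_M in *. rewrite E; auto; lia.
  - auto.
  - unfold kasner_g in *. rewrite E; auto; lia.
Qed.

Lemma seg_in_piece k s K sg m : SI k s -> SI K sg -> s 0%nat = sg 0%nat -> s k = sg K ->
  (forall j, (j <= k)%nat -> exists n, (n <= K)%nat /\ sg n = s j) -> (m < K)%nat ->
  exists j, (j < k)%nat /\ s j <= sg m /\ sg (S m) <= s (S j).
Proof.
  intros Hs Hsg H0 HK Hn Hm.
  assert (Hin : s 0%nat <= sg m <= s k).
  { rewrite H0, HK. split; apply (SI_le K); auto; lia. }
  assert (Hlt : sg m < s k) by (rewrite HK; apply (SI_lt K); auto).
  assert (Hj : exists j, (j < k)%nat /\ s j <= sg m < s (S j)).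
  { destruct (find_interval k s (sg m) Hs Hin) as [[j [Hj E]]|[j [Hj E]]].
    - exists j. destruct (Nat.eq_dec j k) as [->|]. lra. split; [lia|]. rewrite <- E. split; [lra|]. apply Hs; lia.
    - exists j. split; auto. lra. }
  destruct Hj as [j [Hj [E1 E2]]]. exists j. repeat split; auto.
  destruct (Hn (S j) ltac:(lia)) as [n [HnK En]].
  assert (m < n)%nat by (apply (SI_rev K sg); auto; try lia; rewrite En; lra).
  rewrite <- En. apply (SI_le K); auto; lia.
Qed.


Section PhaseA.
Variables (d : nat) (p : nat -> R) (a b : R) (g : R -> pt) (k : nat) (s : nat -> R)
  (f : nat -> nat -> R -> R).
Hypothesis Hab : a < b.
Hypothesis HCD : CD d p a b g k s f.

Definition SegConcl (F : nat -> R -> R) (x y : R) : Prop :=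
  (forall l u, 0 <= l <= 1 -> x <= u <= y ->
     Qf d p ((1 - l) * F 0%nat u + l * (F 0%nat x + (u - x) * chord F x y 0%nat))
            (fun i => (1 - l) * Derive (F i) u + l * chord F x y i) < 0) /\
  (forall t, Rabs (t - F 0%nat x) <= Rabs (F 0%nat y - F 0%nat x) -> Qf d p t (chord F x y) < 0).

Lemma curve_eta : exists eta, 0 < eta /\ forall j, (j < k)%nat -> forall x y,
  s j <= x -> x < y -> y <= s (S j) -> y - x <= eta -> SegConcl (f j) x y.
Proof.
  destruct HCD as [H0 [Hk [HS HP]]].
  apply (fin_pos k (fun j eta => forall x y, s j <= x -> x < y -> y <= s (S j) -> y - x <= eta -> SegConcl (f j) x y)).
  { intros j e1 e2 He H x y H1 H2 H3 H4. apply H; auto. lra. }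
  intros j Hj. destruct (HP j Hj) as [Hsm Hpc].
  assert (Hgood : forall u, s j <= u <= s (S j) -> 0 < f j 0%nat u /\ 0 < Derive (f j 0%nat) u /\
     Qf d p (f j 0%nat u) (fun i => Derive (f j i) u) < 0).
  { intros u Hu. destruct (Hpc u Hu) as [Ha [Hm [Hv Hg]]].
    unfold in_M in Hm. rewrite (Ha 0%nat ltac:(lia)) in Hm. split; auto. split. apply Hv.
    unfold kasner_g in Hg. rewrite (Ha 0%nat ltac:(lia)) in Hg. apply Hg. }
  destruct (seg_lemma d p (s j) (s (S j)) (f j) (HS j Hj) Hsm Hgood) as [eta [He Hs]].
  exists eta. split; [exact He|]. intros x y H1 H2 H3 H4. apply Hs; auto.
Qed.

Lemma phaseA : exists eta, 0 < eta /\ forall K sg, SI K sg -> sg 0%nat = a -> sg K = b ->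
  (forall j, (j <= k)%nat -> exists n, (n <= K)%nat /\ sg n = s j) ->
  (forall m, (m < K)%nat -> sg (S m) - sg m <= eta) ->
  (forall l, 0 <= l <= 1 -> FDTL_curve d p a b
     (fun u i => (1 - l) * g (clamp a b u) i + l * PL K sg (fun m => g (sg m)) u i)) /\
  (forall m, (m < K)%nat -> forall t, g (sg m) 0%nat <= t <= g (sg (S m)) 0%nat ->
     Qf d p t (fun i => g (sg (S m)) i - g (sg m) i) < 0).
Proof.
  destruct curve_eta as [eta [He Heta]].
  exists eta. split; [exact He|]. intros K sg HSg Hg0 HgK Hn Hmesh.
  assert (HCD' := HCD). destruct HCD' as [H0 [Hk [HS HP]]].
  destruct (fin_choice 0%nat K (fun m j => (j < k)%nat /\ s j <= sg m /\ sg (S m) <= s (S j))) as [J HJ].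
  { intros m Hm. apply (seg_in_piece k s K sg m); auto; congruence. }
  set (Y := fun m => g (sg m)).
  assert (Hsg_in : forall m, (m <= K)%nat -> a <= sg m <= b).
  { intros m Hm. split. rewrite <- Hg0. apply (SI_le K); auto; lia. rewrite <- HgK. apply (SI_le K); auto. }
  assert (Fact : forall m, (m < K)%nat ->
     (J m < k)%nat /\ s (J m) <= sg m /\ sg (S m) <= s (S (J m)) /\ sg m < sg (S m) /\
     (forall i, (i <= d)%nat -> slope sg Y m i = chord (f (J m)) (sg m) (sg (S m)) i) /\
     SegConcl (f (J m)) (sg m) (sg (S m))).
  { intros m Hm. destruct (HJ m Hm) as [Hj [E1 E2]].
    assert (Hlt : sg m < sg (S m)) by (apply HSg; auto).
    destruct (HP (J m) Hj) as [Hsm Hpc].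
    split; [auto|]. split; [auto|]. split; [auto|]. split; [auto|]. split.
    - intros i Hi. unfold slope, chord, Y.
      rewrite (proj1 (Hpc (sg m) ltac:(lra)) i Hi). rewrite (proj1 (Hpc (sg (S m)) ltac:(lra)) i Hi).
      reflexivity.
    - apply Heta; auto. }
  split.
  - intros l Hl. apply FDTL_curve_iff. split; auto.
    exists K, sg, (fun m i x => (1 - l) * f (J m) i x + l * (Y m i + (x - sg m) * slope sg Y m i)).
    split; auto. split; auto. split; auto. intros m Hm.
    destruct (Fact m Hm) as [Hj [E1 [E2 [Hlt [Hsl HSC]]]]].
    destruct (HP (J m) Hj) as [Hsm Hpc].
    split.
    + intros i Hi. apply (smooth_plus (fun x => (1 - l) * f (J m) i x) (fun x => l * (Y m i + (x - sg m) * slope sg Y m i))).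
      apply smooth_scal, Hsm, Hi. apply smooth_scal, smooth_affine.
    + intros u Hu.
      assert (Hu' : a <= u <= b) by (assert (H1 := Hsg_in m ltac:(lia)); assert (H2 := Hsg_in (S m) ltac:(lia)); lra).
      destruct (Hpc u ltac:(lra)) as [Ha [Hm' [Hv Hg']]].
      assert (HD : forall i, (i <= d)%nat -> Derive (fun x => (1 - l) * f (J m) i x + l * (Y m i + (x - sg m) * slope sg Y m i)) u
                    = (1 - l) * Derive (f (J m) i) u + l * chord (f (J m)) (sg m) (sg (S m)) i).
      { intros i Hi. rewrite (Derive_lin (f (J m) i) (fun x => Y m i + (x - sg m) * slope sg Y m i)).
        rewrite Derive_affine, Hsl; auto. apply Hsm, Hi. apply smooth_affine. }
      assert (Hh0 : (1 - l) * g (clamp a b u) 0%nat + l * PL K sg Y u 0%nat =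
                    (1 - l) * f (J m) 0%nat u + l * (f (J m) 0%nat (sg m) + (u - sg m) * chord (f (J m)) (sg m) (sg (S m)) 0%nat)).
      { rewrite clamp_id by auto. rewrite (PL_seg K sg Y m u) by auto. rewrite Ha by lia.
        rewrite Hsl by lia. unfold Y. rewrite (proj1 (Hpc (sg m) ltac:(lra)) 0%nat ltac:(lia)). reflexivity. }
      assert (Hmono : Y m 0%nat < Y (S m) 0%nat).
      { unfold Y. assert (H1 := Hsg_in m ltac:(lia)). assert (H2 := Hsg_in (S m) ltac:(lia)). apply (curve_mono d p a b g k s f); auto; lra. }
      assert (Hc0 : 0 < chord (f (J m)) (sg m) (sg (S m)) 0%nat).
      { rewrite <- Hsl by lia. unfold slope. apply Rdiv_lt_0_compat; lra. }
      assert (HY0 : 0 < f (J m) 0%nat (sg m)).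
      { destruct (Hpc (sg m) ltac:(lra)) as [Ha2 [Hm2 _]]. unfold in_M in Hm2. rewrite Ha2 in Hm2 by lia. auto. }
      assert (Hgu : 0 < f (J m) 0%nat u) by (unfold in_M in Hm'; rewrite Ha in Hm' by lia; auto).
      split; [|split; [|split]].
      * intros i Hi. rewrite clamp_id by auto. rewrite (PL_seg K sg Y m u) by auto. rewrite Ha by auto. reflexivity.
      * unfold in_M. cbv beta. rewrite Hh0.
        assert (0 <= (u - sg m) * chord (f (J m)) (sg m) (sg (S m)) 0%nat) by (apply Rmult_le_pos; lra).
        destruct (Req_dec l 0) as [->|]; [lra|]. destruct (Req_dec l 1) as [->|]; [lra|]. nra.
      * cbv beta. rewrite HD by lia. simpl in Hv.
        destruct (Req_dec l 0) as [->|]; [lra|]. destruct (Req_dec l 1) as [->|]; [lra|]. nra.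
      * rewrite kasner_g_Qf. cbv beta. rewrite Hh0.
        rewrite (Qf_ext d p _ _ (fun i => (1 - l) * Derive (f (J m) i) u + l * chord (f (J m)) (sg m) (sg (S m)) i)).
        apply (proj1 HSC); auto. apply HD; lia. intros i Hi; apply HD; lia.
  - intros m Hm t Ht.
    destruct (Fact m Hm) as [Hj [E1 [E2 [Hlt [Hsl HSC]]]]].
    destruct (HP (J m) Hj) as [Hsm Hpc].
    rewrite (Qf_ext d p t _ (fun i => (sg (S m) - sg m) * chord (f (J m)) (sg m) (sg (S m)) i)).
    + rewrite Qf_scal. assert (0 < (sg (S m) - sg m) ^ 2) by (apply pow_lt; lra).
      assert (Qf d p t (chord (f (J m)) (sg m) (sg (S m))) < 0); [|nra].
      apply (proj2 HSC).
      rewrite <- (proj1 (Hpc (sg m) ltac:(lra)) 0%nat ltac:(lia)).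
      rewrite <- (proj1 (Hpc (sg (S m)) ltac:(lra)) 0%nat ltac:(lia)).
      rewrite !Rabs_right; lra.
    + rewrite <- Hsl by lia. unfold slope, Y. field. lra.
    + intros i Hi. rewrite <- Hsl by lia. unfold slope, Y. field. lra.
Qed.

End PhaseA.


Lemma phaseB d p a b K (s0 s1 z : nat -> R) (Y0 Y1 : nat -> pt) :
  a < b -> SI K s0 -> SI K s1 -> s0 0%nat = a -> s1 0%nat = a -> s0 K = b -> s1 K = b ->
  SI K z -> 0 < z 0%nat ->
  (forall m, (m <= K)%nat -> Y0 m 0%nat = z m /\ Y1 m 0%nat = z m) ->
  (forall m, (m < K)%nat -> forall t, z m <= t <= z (S m) ->
     Qf d p t (fun i => Y0 (S m) i - Y0 m i) < 0 /\ Qf d p t (fun i => Y1 (S m) i - Y1 m i) < 0) ->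
  forall mu, 0 <= mu <= 1 ->
  FDTL_curve d p a b (PL K (fun m => (1 - mu) * s0 m + mu * s1 m) (fun m i => (1 - mu) * Y0 m i + mu * Y1 m i)).
Proof.
  intros Hab HS0 HS1 H00 H10 H0K H1K HSz Hz0 HY HQ mu Hmu.
  set (rho := fun m => (1 - mu) * s0 m + mu * s1 m).
  set (Y := fun m i => (1 - mu) * Y0 m i + mu * Y1 m i).
  assert (HSr : SI K rho).
  { intros j Hj. unfold rho. assert (s0 j < s0 (S j)) by auto. assert (s1 j < s1 (S j)) by auto.
    destruct (Req_dec mu 0) as [->|]; [lra|]. destruct (Req_dec mu 1) as [->|]; [lra|]. nra. }
  assert (HY0 : forall m, (m <= K)%nat -> Y m 0%nat = z m).
  { intros m Hm. unfold Y. destruct (HY m Hm) as [E1 E2]. rewrite E1, E2. ring. }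
  apply FDTL_curve_iff. split; auto.
  exists K, rho, (fun m i x => Y m i + (x - rho m) * slope rho Y m i).
  split; [unfold rho; rewrite H00, H10; ring|].
  split; [unfold rho; rewrite H0K, H1K; ring|].
  split; [exact HSr|].
  intros m Hm. split.
  - intros i Hi. apply smooth_affine.
  - intros u Hu.
    assert (Hr : rho m < rho (S m)) by (apply HSr; auto).
    assert (Hzm : z m < z (S m)) by (apply HSz; auto).
    assert (Hz0m : 0 < z m). { destruct (Nat.eq_dec m 0) as [->|]; auto.
      assert (z 0%nat < z m) by (apply (SI_lt K); auto; lia). lra. }
    assert (Hsl0 : slope rho Y m 0%nat = (z (S m) - z m) / (rho (S m) - rho m)).
    { unfold slope. rewrite !HY0 by lia. reflexivity. }
    assert (Hslp : 0 < slope rho Y m 0%nat) by (rewrite Hsl0; apply Rdiv_lt_0_compat; lra).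
    assert (Ht : z m <= Y m 0%nat + (u - rho m) * slope rho Y m 0%nat <= z (S m)).
    { rewrite HY0 by lia. rewrite Hsl0. split.
      assert (0 <= (u - rho m) * ((z (S m) - z m) / (rho (S m) - rho m))) by (apply Rmult_le_pos; lra). lra.
      replace (z m + (u - rho m) * ((z (S m) - z m) / (rho (S m) - rho m))) with
        (z m + (u - rho m) / (rho (S m) - rho m) * (z (S m) - z m)) by (field; lra).
      assert ((u - rho m) / (rho (S m) - rho m) <= 1).
      { unfold Rdiv. apply (Rmult_le_reg_r (rho (S m) - rho m)). lra. rewrite Rmult_assoc, Rinv_l by lra. lra. }
      nra. }
    split; [|split; [|split]].
    + intros i Hi. apply PL_seg; auto.
    + unfold in_M. rewrite (PL_seg K rho Y m u 0%nat) by auto. lra.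
    + simpl. rewrite Derive_affine. auto.
    + rewrite kasner_g_Qf. rewrite (PL_seg K rho Y m u 0%nat) by auto.
      set (t := Y m 0%nat + (u - rho m) * slope rho Y m 0%nat) in *.
      rewrite (Qf_ext d p t _ (fun i => / (rho (S m) - rho m) * ((1 - mu) * (Y0 (S m) i - Y0 m i) + mu * (Y1 (S m) i - Y1 m i)))).
      * rewrite Qf_scal.
        assert (Hc := Qf_convex d p t (fun i => Y0 (S m) i - Y0 m i) (fun i => Y1 (S m) i - Y1 m i) mu Hmu).
        cbv beta in Hc. destruct (HY m ltac:(lia)) as [E1 E2]. destruct (HY (S m) ltac:(lia)) as [E3 E4].
        rewrite E1, E2, E3, E4 in Hc. specialize (Hc eq_refl).
        destruct (HQ m Hm t Ht) as [Q0 Q1].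
        assert (0 < (/ (rho (S m) - rho m)) ^ 2) by (apply pow_lt; apply Rinv_0_lt_compat; lra).
        assert (Qf d p t (fun i => (1 - mu) * (Y0 (S m) i - Y0 m i) + mu * (Y1 (S m) i - Y1 m i)) < 0).
        { destruct (Req_dec mu 0) as [->|]; [lra|]. destruct (Req_dec mu 1) as [->|]; [lra|]. nra. }
        nra.
      * rewrite Derive_affine. unfold slope, Y. field. lra.
      * intros i Hi. rewrite Derive_affine. unfold slope, Y. field. lra.
Qed.


Lemma piece_lower d p a b g k s f : a < b -> CD d p a b g k s f ->
  exists c, 0 < c /\ forall j, (j < k)%nat -> forall x y, s j <= x -> x < y -> y <= s (S j) ->
    c * (y - x) <= g y 0%nat - g x 0%nat.
Proof.
  intros Hab [H0 [Hk [HS HP]]].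
  apply (fin_pos k (fun j c => forall x y, s j <= x -> x < y -> y <= s (S j) -> c * (y - x) <= g y 0%nat - g x 0%nat)).
  { intros j c1 c2 Hc H x y H1 H2 H3. specialize (H x y H1 H2 H3).
    assert (c2 * (y - x) <= c1 * (y - x)) by (apply Rmult_le_compat_r; lra). lra. }
  intros j Hj. destruct (HP j Hj) as [Hsm Hpc].
  assert (Hsj : s j < s (S j)) by (apply HS; auto).
  destruct (continuity_ab_min (Derive (f j 0%nat)) (s j) (s (S j))) as [xm [Hm Hxm]]. lra.
  { intros c _. apply smooth_Derive_cont, Hsm. lia. }
  exists (Derive (f j 0%nat) xm). split.
  { destruct (Hpc xm Hxm) as [_ [_ [Hv _]]]. apply Hv. }
  intros x y H1 H2 H3.
  rewrite (proj1 (Hpc x ltac:(lra)) 0%nat ltac:(lia)), (proj1 (Hpc y ltac:(lra)) 0%nat ltac:(lia)).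
  destruct (MVT_gen (f j 0%nat) x y (Derive (f j 0%nat))) as [c [Hc E]].
  - intros z _. apply Derive_correct. apply smooth_ex_derive, Hsm. lia.
  - intros z _. apply smooth_cont, Hsm. lia.
  - rewrite Rmin_left in Hc by lra. rewrite Rmax_right in Hc by lra.
    rewrite E. apply Rmult_le_compat_r. lra. apply Hm. lra.
Qed.

Lemma PL_start K rho Y i : SI K rho -> (0 < K)%nat -> PL K rho Y (rho 0%nat) i = Y 0%nat i.
Proof.
  intros HS HK. rewrite (PL_seg K rho Y 0 (rho 0%nat)); auto. ring.
  split. lra. left. apply HS. auto.
Qed.

Lemma PL_end K rho Y i : SI K rho -> (0 < K)%nat -> PL K rho Y (rho K) i = Y K i.
Proof.
  intros HS HK. destruct K as [|K]. lia.
  rewrite (PL_seg (S K) rho Y K (rho (S K))); auto.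
  unfold slope. field. assert (rho K < rho (S K)) by (apply HS; lia). lra.
  split. left. apply HS. lia. lra.
Qed.

Lemma c2_2 (h : R -> R) x y : continuity_pt h y -> continuity_2d_pt (fun _ v => h v) x y.
Proof.
  intros H. apply (continuity_1d_2d_pt_comp h (fun _ v => v)); auto. apply continuity_2d_pt_id2.
Qed.

Lemma c2_clamp (F : R -> R -> R) lo hi x y : lo <= hi -> continuity_2d_pt F x y ->
  continuity_2d_pt (fun u v => clamp lo hi (F u v)) x y.
Proof. intros Hl H. apply (c2_comp (clamp lo hi)); auto. apply clamp_cont; auto. Qed.

Lemma c2_sumk (G : nat -> R -> R -> R) K x y : (forall m, (m < K)%nat -> continuity_2d_pt (G m) x y) ->
  continuity_2d_pt (fun u v => sumk (fun m => G m u v) K) x y.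
Proof.
  induction K as [|K IH]; intros H; simpl.
  - apply continuity_2d_pt_const.
  - apply continuity_2d_pt_plus. apply IH; intros; apply H; lia. apply H; lia.
Qed.

Ltac c2 := repeat (first
  [ apply continuity_2d_pt_const | apply continuity_2d_pt_id1 | apply continuity_2d_pt_id2
  | apply continuity_2d_pt_plus | apply continuity_2d_pt_minus | apply continuity_2d_pt_mult
  | apply continuity_2d_pt_opp | apply c2_clamp; [lra|] ]).

Definition lamf (u : R) := clamp 0 1 (3 * u).
Definition muf (u : R) := clamp 0 1 (3 * u - 1).
Definition nuf (u : R) := clamp 0 1 (3 * u - 2).
Definition PLm K (s0 s1 : nat -> R) (Y0 Y1 : nat -> pt) (mu : R) : R -> pt :=
  PL K (fun m => (1 - mu) * s0 m + mu * s1 m) (fun m i => (1 - mu) * Y0 m i + mu * Y1 m i).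
Definition Hom a b (g0 g1 : R -> pt) K s0 s1 Y0 Y1 (u s : R) : pt := fun i =>
  (1 - lamf u) * g0 (clamp a b s) i +
  lamf u * ((1 - nuf u) * PLm K s0 s1 Y0 Y1 (muf u) s i + nuf u * g1 (clamp a b s) i).

Lemma Hom_cont a b g0 g1 K s0 s1 Y0 Y1 i :
  (forall x, continuity_pt (fun y => g0 (clamp a b y) i) x) ->
  (forall x, continuity_pt (fun y => g1 (clamp a b y) i) x) ->
  SI K s0 -> SI K s1 ->
  forall u s, continuity_2d_pt (fun u s => Hom a b g0 g1 K s0 s1 Y0 Y1 u s i) u s.
Proof.
  intros Hg0 Hg1 HS0 HS1 u s.
  unfold Hom, PLm, PL, lamf, muf, nuf. c2.
  - apply (c2_2 (fun y => g0 (clamp a b y) i)). apply Hg0.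
  - apply (c2_sumk (fun m u v => ((1 - clamp 0 1 (3 * u - 1)) * Y0 (S m) i + clamp 0 1 (3 * u - 1) * Y1 (S m) i -
     ((1 - clamp 0 1 (3 * u - 1)) * Y0 m i + clamp 0 1 (3 * u - 1) * Y1 m i)) *
    clamp 0 1 ((v - ((1 - clamp 0 1 (3 * u - 1)) * s0 m + clamp 0 1 (3 * u - 1) * s1 m)) /
     ((1 - clamp 0 1 (3 * u - 1)) * s0 (S m) + clamp 0 1 (3 * u - 1) * s1 (S m) -
      ((1 - clamp 0 1 (3 * u - 1)) * s0 m + clamp 0 1 (3 * u - 1) * s1 m))))).
    intros m Hm. unfold Rdiv. c2.
    apply continuity_2d_pt_inv. c2.
    assert (H1 := clamp_in 0 1 (3 * u - 1) ltac:(lra)).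
    assert (s0 m < s0 (S m)) by auto. assert (s1 m < s1 (S m)) by auto.
    set (M := clamp 0 1 (3 * u - 1)) in *.
    destruct (Req_dec M 0) as [E|]. rewrite E; lra. destruct (Req_dec M 1) as [E|]. rewrite E; lra. nra.
  - apply (c2_2 (fun y => g1 (clamp a b y) i)). apply Hg1.
Qed.

Lemma curve_mono_le d p a b g k s f x y : a < b -> CD d p a b g k s f -> a <= x -> x <= y -> y <= b ->
  g x 0%nat <= g y 0%nat.
Proof.
  intros Hab HCD H1 H2 H3. destruct (Req_dec x y) as [->|]. lra.
  left. apply (curve_mono d p a b g k s f); auto; lra.
Qed.

Lemma nodes_exist d p a b g k s f : a < b -> CD d p a b g k s f ->
  exists c, 0 < c /\ forall K z, SI K z -> z 0%nat = g a 0%nat -> z K = g b 0%nat ->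
    (forall j, (j <= k)%nat -> exists n, (n <= K)%nat /\ z n = g (s j) 0%nat) ->
    exists sg, SI K sg /\ sg 0%nat = a /\ sg K = b /\ (forall m, (m <= K)%nat -> g (sg m) 0%nat = z m) /\
      (forall j, (j <= k)%nat -> exists n, (n <= K)%nat /\ sg n = s j) /\
      (forall m, (m < K)%nat -> c * (sg (S m) - sg m) <= z (S m) - z m).
Proof.
  intros Hab HCD.
  destruct (piece_lower d p a b g k s f Hab HCD) as [c [Hc Hlow]].
  exists c. split; auto. intros K z HSz Hz0 HzK Hn.
  assert (HzI : forall m, (m <= K)%nat -> g a 0%nat <= z m <= g b 0%nat).
  { intros m Hm. rewrite <- Hz0, <- HzK. split; apply (SI_le K); auto; lia. }
  destruct (fin_choice 0 (S K) (fun m x => a <= x <= b /\ g x 0%nat = z m)) as [sg Hsg].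
  { intros m Hm. apply (curve_ivt d p a b g k s f Hab HCD). apply HzI. lia. }
  assert (Hsg' : forall m, (m <= K)%nat -> a <= sg m <= b /\ g (sg m) 0%nat = z m) by (intros; apply Hsg; lia).
  assert (HSI : SI K sg).
  { intros m Hm. destruct (Hsg' m ltac:(lia)) as [I1 E1]. destruct (Hsg' (S m) ltac:(lia)) as [I2 E2].
    destruct (Rlt_le_dec (sg m) (sg (S m))) as [h|h]; auto.
    assert (g (sg (S m)) 0%nat <= g (sg m) 0%nat) by (apply (curve_mono_le d p a b g k s f); auto; lra).
    assert (z m < z (S m)) by (apply HSz; auto). lra. }
  assert (Hsa : sg 0%nat = a).
  { destruct (Hsg' 0%nat ltac:(lia)) as [I E]. apply (curve_inj d p a b g k s f); auto; lra. }
  assert (Hsb : sg K = b).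
  { destruct (Hsg' K ltac:(lia)) as [I E]. apply (curve_inj d p a b g k s f); auto; lra. }
  assert (Hnd : forall j, (j <= k)%nat -> exists n, (n <= K)%nat /\ sg n = s j).
  { intros j Hj. destruct (Hn j Hj) as [n [Hn' E]]. exists n. split; auto.
    destruct (Hsg' n Hn') as [I E2]. apply (curve_inj d p a b g k s f); auto.
    apply (CD_s_in d p a b g k s f); auto. congruence. }
  exists sg. split; [exact HSI|]. split; [exact Hsa|]. split; [exact Hsb|]. split; [|split; [exact Hnd|]].
  - intros m Hm. apply Hsg'; auto.
  - intros m Hm.
    destruct HCD as [H0 [Hk [HS HP]]].
    destruct (seg_in_piece k s K sg m HS HSI) as [j [Hj [E1 E2]]]; try congruence; auto.
    destruct (Hsg' m ltac:(lia)) as [_ E3]. destruct (Hsg' (S m) ltac:(lia)) as [_ E4].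
    rewrite <- E3, <- E4. apply (Hlow j); auto.
Qed.


Lemma clamp_lo lo hi x : lo <= hi -> x <= lo -> clamp lo hi x = lo.
Proof. intros. unfold clamp, Rmax, Rmin. repeat destruct Rle_dec; lra. Qed.
Lemma clamp_hi lo hi x : lo <= hi -> hi <= x -> clamp lo hi x = hi.
Proof. intros. unfold clamp, Rmax, Rmin. repeat destruct Rle_dec; lra. Qed.

Lemma PLm_start K s0 s1 Y0 Y1 mu a i : SI K s0 -> SI K s1 -> (0 < K)%nat -> s0 0%nat = a -> s1 0%nat = a ->
  0 <= mu <= 1 -> PLm K s0 s1 Y0 Y1 mu a i = (1 - mu) * Y0 0%nat i + mu * Y1 0%nat i.
Proof.
  intros H0 H1 HK E0 E1 Hmu. unfold PLm.
  replace a with ((1 - mu) * s0 0%nat + mu * s1 0%nat) at 1 by (rewrite E0, E1; ring).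
  rewrite PL_start; auto.
  intros j Hj. assert (s0 j < s0 (S j)) by auto. assert (s1 j < s1 (S j)) by auto.
  destruct (Req_dec mu 0) as [->|]; [lra|]. destruct (Req_dec mu 1) as [->|]; [lra|]. nra.
Qed.

Lemma PLm_end K s0 s1 Y0 Y1 mu b i : SI K s0 -> SI K s1 -> (0 < K)%nat -> s0 K = b -> s1 K = b ->
  0 <= mu <= 1 -> PLm K s0 s1 Y0 Y1 mu b i = (1 - mu) * Y0 K i + mu * Y1 K i.
Proof.
  intros H0 H1 HK E0 E1 Hmu. unfold PLm.
  replace b with ((1 - mu) * s0 K + mu * s1 K) at 1 by (rewrite E0, E1; ring).
  rewrite PL_end; auto.
  intros j Hj. assert (s0 j < s0 (S j)) by auto. assert (s1 j < s1 (S j)) by auto.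
  destruct (Req_dec mu 0) as [->|]; [lra|]. destruct (Req_dec mu 1) as [->|]; [lra|]. nra.
Qed.

Theorem lemma3p3 (d : nat) (p : nat -> R) :
  (3 <= d)%nat -> kasner_exponents d p -> future_one_connected d p.
Proof.
  intros _ _ P Q HPQ a b g0 g1 HF0 [HP0 HQ0] HF1 [HP1 HQ1].
  destruct HPQ as [HPM _].
  apply FDTL_curve_iff in HF0. destruct HF0 as [Hab [k0 [s0 [f0 CD0]]]].
  apply FDTL_curve_iff in HF1. destruct HF1 as [_ [k1 [s1 [f1 CD1]]]].
  assert (Ea : forall i, (i <= d)%nat -> g1 a i = g0 a i) by (intros i Hi; rewrite HP0, HP1; auto).
  assert (Eb : forall i, (i <= d)%nat -> g1 b i = g0 b i) by (intros i Hi; rewrite HQ0, HQ1; auto).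
  assert (HtP : 0 < g0 a 0%nat) by (unfold in_M in HPM; rewrite HP0; auto; lia).
  assert (HtPQ : g0 a 0%nat < g0 b 0%nat) by (apply (curve_mono d p a b g0 k0 s0 f0); auto; lra).
  destruct (phaseA d p a b g0 k0 s0 f0 Hab CD0) as [eta0 [He0 PA0]].
  destruct (phaseA d p a b g1 k1 s1 f1 Hab CD1) as [eta1 [He1 PA1]].
  destruct (nodes_exist d p a b g0 k0 s0 f0 Hab CD0) as [c0 [Hc0 NE0]].
  destruct (nodes_exist d p a b g1 k1 s1 f1 Hab CD1) as [c1 [Hc1 NE1]].
  set (h := Rmin (eta0 * c0) (eta1 * c1)).
  assert (Hh : 0 < h) by (apply Rmin_pos; apply Rmult_lt_0_compat; auto).
  set (L := map (fun j => g0 (s0 j) 0%nat) (seq 0 (S k0)) ++ map (fun j => g1 (s1 j) 0%nat) (seq 0 (S k1))).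
  destruct (grid_exists (g0 a 0%nat) (g0 b 0%nat) h L HtPQ Hh) as [K [z [Hz0 [HzK [HSz [Hn Hmesh]]]]]].
  { intros x Hx. apply in_app_or in Hx. destruct Hx as [Hx|Hx]; apply in_map_iff in Hx;
      destruct Hx as [j [<- Hj]]; apply in_seq in Hj.
    - assert (I := CD_s_in d p a b g0 k0 s0 f0 CD0 j ltac:(lia)).
      split; apply (curve_mono_le d p a b g0 k0 s0 f0); auto; lra.
    - assert (I := CD_s_in d p a b g1 k1 s1 f1 CD1 j ltac:(lia)).
      rewrite <- (Ea 0%nat), <- (Eb 0%nat) by lia.
      split; apply (curve_mono_le d p a b g1 k1 s1 f1); auto; lra. }
  assert (HK : (0 < K)%nat). { destruct K. rewrite Hz0 in HzK. lra. lia. }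
  destruct (NE0 K z HSz Hz0 HzK) as [sg0 [HS0 [H00 [H0K [Hz0' [Hnd0 Hlow0]]]]]].
  { intros j Hj. apply Hn. apply in_or_app. left. apply (in_map (fun j => g0 (s0 j) 0%nat)). apply in_seq. lia. }
  destruct (NE1 K z HSz) as [sg1 [HS1 [H10 [H1K [Hz1' [Hnd1 Hlow1]]]]]].
  { rewrite Ea by lia. auto. } { rewrite Eb by lia. auto. }
  { intros j Hj. apply Hn. apply in_or_app. right. apply (in_map (fun j => g1 (s1 j) 0%nat)). apply in_seq. lia. }
  assert (Hm0 : forall m, (m < K)%nat -> sg0 (S m) - sg0 m <= eta0).
  { intros m Hm. assert (H1 := Hlow0 m Hm). assert (H2 := Hmesh m Hm).
    assert (h <= eta0 * c0) by apply Rmin_l.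
    apply (Rmult_le_reg_l c0); auto. lra. }
  assert (Hm1 : forall m, (m < K)%nat -> sg1 (S m) - sg1 m <= eta1).
  { intros m Hm. assert (H1 := Hlow1 m Hm). assert (H2 := Hmesh m Hm).
    assert (h <= eta1 * c1) by apply Rmin_r.
    apply (Rmult_le_reg_l c1); auto. lra. }
  destruct (PA0 K sg0 HS0 H00 H0K Hnd0 Hm0) as [A0 S0].
  destruct (PA1 K sg1 HS1 H10 H1K Hnd1 Hm1) as [A1 S1].
  set (Y0 := fun m => g0 (sg0 m)). set (Y1 := fun m => g1 (sg1 m)).
  assert (PB := phaseB d p a b K sg0 sg1 z Y0 Y1 Hab HS0 HS1 H00 H10 H0K H1K HSz ltac:(lra)).
  assert (HY : forall m, (m <= K)%nat -> Y0 m 0%nat = z m /\ Y1 m 0%nat = z m).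
  { intros m Hm. unfold Y0, Y1. split; [apply Hz0'|apply Hz1']; auto. }
  assert (HQ : forall m, (m < K)%nat -> forall t, z m <= t <= z (S m) ->
     Qf d p t (fun i => Y0 (S m) i - Y0 m i) < 0 /\ Qf d p t (fun i => Y1 (S m) i - Y1 m i) < 0).
  { intros m Hm t Ht. unfold Y0, Y1. split.
    - apply S0; auto. rewrite !Hz0' by lia. auto.
    - apply S1; auto. rewrite !Hz1' by lia. auto. }
  specialize (PB HY HQ).
  exists (Hom a b g0 g1 K sg0 sg1 Y0 Y1).
  split; [|split].
  - intros i Hi u s Hu Hs eps He.
    destruct (Hom_cont a b g0 g1 K sg0 sg1 Y0 Y1 i
      (fun x => curve_cont d p a b g0 k0 s0 f0 Hab CD0 i x Hi)
      (fun x => curve_cont d p a b g1 k1 s1 f1 Hab CD1 i x Hi) HS0 HS1 u s (mkposreal eps He)) as [del Hdel].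
    exists del. split; [apply cond_pos|]. intros u' s' _ _ H1 H2. apply (Hdel u' s' H1 H2).
  - intros s Hs.
    assert (L0 : lamf 0 = 0) by (unfold lamf; apply clamp_lo; lra).
    assert (L1 : lamf 1 = 1) by (unfold lamf; apply clamp_hi; lra).
    assert (N1 : nuf 1 = 1) by (unfold nuf; apply clamp_hi; lra).
    split; intros i Hi; unfold Hom; rewrite (clamp_id a b s) by lra.
    + rewrite L0. ring.
    + rewrite L1, N1. ring.
  - intros u Hu. split.
    + destruct (Rle_dec u (1/3)) as [h1|h1]; [|destruct (Rle_dec u (2/3)) as [h2|h2]].
      * assert (Hl : lamf u = 3 * u) by (unfold lamf; apply clamp_id; lra).
        assert (Hmu : muf u = 0) by (unfold muf; apply clamp_lo; lra).
        assert (Hnu : nuf u = 0) by (unfold nuf; apply clamp_lo; lra).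
        apply (FDTL_curve_ext d p a b _ _ (A0 (3 * u) ltac:(lra))).
        intros s Hs i Hi. unfold Hom. rewrite Hl, Hmu, Hnu. unfold PLm.
        rewrite (PL_ext K (fun m => (1 - 0) * sg0 m + 0 * sg1 m) sg0
                   (fun m i => (1 - 0) * Y0 m i + 0 * Y1 m i) (fun m => g0 (sg0 m))).
        ring. intros; ring. intros; unfold Y0; ring.
      * assert (Hl : lamf u = 1) by (unfold lamf; apply clamp_hi; lra).
        assert (Hmu : muf u = 3 * u - 1) by (unfold muf; apply clamp_id; lra).
        assert (Hnu : nuf u = 0) by (unfold nuf; apply clamp_lo; lra).
        apply (FDTL_curve_ext d p a b _ _ (PB (3 * u - 1) ltac:(lra))).
        intros s Hs i Hi. unfold Hom. rewrite Hl, Hmu, Hnu. unfold PLm. ring.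
      * assert (Hl : lamf u = 1) by (unfold lamf; apply clamp_hi; lra).
        assert (Hmu : muf u = 1) by (unfold muf; apply clamp_hi; lra).
        assert (Hnu : nuf u = 3 * u - 2) by (unfold nuf; apply clamp_id; lra).
        apply (FDTL_curve_ext d p a b _ _ (A1 (1 - (3 * u - 2)) ltac:(lra))).
        intros s Hs i Hi. unfold Hom. rewrite Hl, Hmu, Hnu. unfold PLm.
        rewrite (PL_ext K (fun m => (1 - 1) * sg0 m + 1 * sg1 m) sg1
                   (fun m i => (1 - 1) * Y0 m i + 1 * Y1 m i) (fun m => g1 (sg1 m))).
        ring. intros; ring. intros; unfold Y1; ring.
    + assert (Hmu := clamp_in 0 1 (3 * u - 1) ltac:(lra)). fold (muf u) in Hmu.
      split; intros i Hi; unfold Hom.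
      * rewrite (clamp_id a b a) by lra.
        rewrite (PLm_start K sg0 sg1 Y0 Y1 (muf u) a i) by auto.
        unfold Y0, Y1. rewrite H00, H10, Ea by auto. ring.
      * rewrite (clamp_id a b b) by lra.
        rewrite (PLm_end K sg0 sg1 Y0 Y1 (muf u) b i) by auto.
        unfold Y0, Y1. rewrite H0K, H1K, Eb by auto. ring.
Qed.
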